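(* Let $A\in\mathbb{C}^{m\times n}$ have rank $r$ and $B\in\mathbb{C}^{m\times n}$ have rank $s$, with singular value decompositions $$A=U\begin{pmatrix}\Sigma_{1}&0\\0&0\end{pmatrix}V^{\ast}=U_{1}\Sigma_{1}V_{1}^{\ast},\qquad B=\widetilde{U}\begin{pmatrix}\widetilde{\Sigma}_{1}&0\\0&0\end{pmatrix}\widetilde{V}^{\ast}=\widetilde{U}_{1}\widetilde{\Sigma}_{1}\widetilde{V}_{1}^{\ast},$$ where $U=(U_{1},U_{2})$ and $\widetilde{U}=(\widetilde{U}_{1},\widetilde{U}_{2})$ are $m\times m$ unitary, $V=(V_{1},V_{2})$ and $\widetilde{V}=(\widetilde{V}_{1},\widetilde{V}_{2})$ are $n\times n$ unitary, $U_{1}\in\mathbb{C}^{m\times r}$, $V_{1}\in\mathbb{C}^{n\times r}$, $\widetilde{U}_{1}\in\mathbb{C}^{m\times s}$, $\widetilde{V}_{1}\in\mathbb{C}^{n\times s}$, $\Sigma_{1}=\operatorname{diag}(\sigma_{1},\ldots,\sigma_{r})$ with $\sigma_{1}\geq\cdots\geq\sigma_{r}>0$, and $\widetilde{\Sigma}_{1}=\operatorname{diag}(\widetilde{\sigma}_{1},\ldots,\widetilde{\sigma}_{s})$ with $\widetilde{\sigma}_{1}\geq\cdots\geq\widetilde{\sigma}_{s}>0$. Let $E=B-A$. Then $$\|B^{\dagger}-A^{\dagger}\|_{F}^{2}=\|\widetilde{\Sigma}_{1}^{-1}\widetilde{U}_{1}^{\ast}U_{2}\|_{F}^{2}+\|\widetilde{V}_{2}^{\ast}V_{1}\Sigma_{1}^{-1}\|_{F}^{2}+\|B^{\dagger}EA^{\dagger}\|_{F}^{2},$$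 $$\|B^{\dagger}-A^{\dagger}\|_{F}^{2}=\|\widetilde{U}_{2}^{\ast}U_{1}\Sigma_{1}^{-1}\|_{F}^{2}+\|\widetilde{\Sigma}_{1}^{-1}\widetilde{V}_{1}^{\ast}V_{2}\|_{F}^{2}+\|A^{\dagger}EB^{\dagger}\|_{F}^{2}.$$
   Context: $M^{\dagger}$ denotes the Moore–Penrose inverse of $M$, $M^{\ast}$ the conjugate transpose, and $\|\cdot\|_{F}$ the Frobenius norm. *)

(* Defs.v *)
From HB Require Import structures.
From mathcomp Require Import all_boot all_order all_algebra.
From mathcomp Require Export spectral.
Set Implicit Arguments. Unset Strict Implicit. Unset Printing Implicit Defensive.
Import Order.TTheory GRing.Theory Num.Theory.
Local Open Scope ring_scope.
Local Open Scope sesquilinear_scope.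

(* Complex scalars: an arbitrary numClosedFieldType C (e.g. C = R[i]). *)

Definition ctmx {C : numClosedFieldType} m n (M : 'M[C]_(m, n)) : 'M[C]_(n, m) :=
  M ^t*.

Definition frob2 {C : numClosedFieldType} m n (M : 'M[C]_(m, n)) : C :=
  \sum_(i < m) \sum_(j < n) `|M i j| ^+ 2.

Definition is_pinv {C : numClosedFieldType} m n (A : 'M[C]_(m, n)) (X : 'M[C]_(n, m)) : Prop :=
  [/\ A *m X *m A = A, X *m A *m X = X,
      ctmx (A *m X) = A *m X & ctmx (X *m A) = X *m A].

Definition hcat {C : numClosedFieldType} m r (hr : (r <= m)%N)
  (U1 : 'M[C]_(m, r)) (U2 : 'M[C]_(m, m - r)) : 'M[C]_m :=
  castmx (erefl m, subnKC hr) (row_mx U1 U2).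

Definition sv_seq {C : numClosedFieldType} r (sigma : 'rV[C]_r) : Prop :=
  (forall i, 0 < sigma 0 i) /\ (forall i j : 'I_r, (i <= j)%N -> sigma 0 j <= sigma 0 i).

(* Main.v *)
Require Import Defs.
From HB Require Import structures.
From mathcomp Require Import all_boot all_order all_algebra.
From mathcomp Require Import spectral.
Set Implicit Arguments. Unset Strict Implicit. Unset Printing Implicit Defensive.
Import Order.TTheory GRing.Theory Num.Theory.
Local Open Scope ring_scope.
Local Open Scope sesquilinear_scope.

Lemma adjM (C : numClosedFieldType) m n p (A : 'M[C]_(m,n)) (B : 'M_(n,p)) :
  (A *m B)^t* = B^t* *m A^t*.
Proof. by rewrite trmx_mul map_mxM. Qed.
Lemma adjD (C : numClosedFieldType) m n (A B : 'M[C]_(m,n)) : (A + B)^t* = A^t* + B^t*.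
Proof. by rewrite linearD map_mxD. Qed.
Lemma adjN (C : numClosedFieldType) m n (A : 'M[C]_(m,n)) : (- A)^t* = - A^t*.
Proof. by rewrite linearN map_mxN. Qed.
Lemma adj0 (C : numClosedFieldType) m n : (0 : 'M[C]_(m,n))^t* = 0.
Proof. by rewrite trmx0 map_mx0. Qed.
Lemma adj1 (C : numClosedFieldType) n : (1%:M : 'M[C]_n)^t* = 1%:M.
Proof. by rewrite trmx1 map_mx1. Qed.

Lemma frob2E (C : numClosedFieldType) m n (M : 'M[C]_(m,n)) :
  frob2 M = \tr (M *m M^t*).
Proof.
rewrite /frob2 /mxtrace; apply: eq_bigr => i _; rewrite mxE.
by apply: eq_bigr => j _; rewrite !mxE normCK.
Qed.

Lemma frob2_adj (C : numClosedFieldType) m n (M : 'M[C]_(m,n)) :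
  frob2 (M^t*) = frob2 M.
Proof. by rewrite !frob2E trmxCK mxtrace_mulC. Qed.

Lemma frob2_opp (C : numClosedFieldType) m n (M : 'M[C]_(m,n)) :
  frob2 (- M) = frob2 M.
Proof. by rewrite !frob2E adjN mulmxN mulNmx opprK. Qed.

Lemma frob2_mull (C : numClosedFieldType) m n p (P : 'M[C]_(p,m)) (M : 'M[C]_(m,n)) :
  P^t* *m P = 1%:M -> frob2 (P *m M) = frob2 M.
Proof.
move=> hP; rewrite !frob2E adjM !mulmxA mxtrace_mulC !mulmxA.
by rewrite hP mul1mx.
Qed.

Lemma frob2_mulr (C : numClosedFieldType) m n p (Q : 'M[C]_(n,p)) (M : 'M[C]_(m,n)) :
  Q *m Q^t* = 1%:M -> frob2 (M *m Q) = frob2 M.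
Proof.
by move=> hQ; rewrite !frob2E adjM !mulmxA -(mulmxA M) hQ mulmx1.
Qed.

Lemma frob2_add (C : numClosedFieldType) m n (X Y : 'M[C]_(m,n)) :
  \tr (X *m Y^t*) = 0 -> \tr (Y *m X^t*) = 0 -> frob2 (X + Y) = frob2 X + frob2 Y.
Proof.
move=> h1 h2; rewrite !frob2E adjD mulmxDl !mulmxDr !mxtraceD h1 h2.
by rewrite addr0 add0r.
Qed.

Lemma orth_l (C : numClosedFieldType) m n (X Y : 'M[C]_(m,n)) :
  X^t* *m Y = 0 -> \tr (X *m Y^t*) = 0 /\ \tr (Y *m X^t*) = 0.
Proof.
move=> h; split; last by rewrite mxtrace_mulC h mxtrace0.
by rewrite mxtrace_mulC -[X in _ *m X]trmxCK -adjM h adj0 mxtrace0.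
Qed.

Lemma orth_r (C : numClosedFieldType) m n (X Y : 'M[C]_(m,n)) :
  X *m Y^t* = 0 -> \tr (X *m Y^t*) = 0 /\ \tr (Y *m X^t*) = 0.
Proof.
move=> h; split; first by rewrite h mxtrace0.
by rewrite -[Y in Y *m _]trmxCK -adjM h adj0 mxtrace0.
Qed.

Lemma rowmx_facts (C : numClosedFieldType) m r k (U1 : 'M[C]_(m,r)) (U2 : 'M_(m,k))
  (e : (r + k)%N = m) :
  castmx (erefl m, e) (row_mx U1 U2) \is unitarymx ->
  [/\ U1^t* *m U1 = 1%:M, U2^t* *m U2 = 1%:M, U1^t* *m U2 = 0, U2^t* *m U1 = 0
    & U1 *m U1^t* + U2 *m U2^t* = 1%:M].
Proof.
subst m; rewrite castmx_id => hU.
have h1 := unitarymxP hU.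
have h2 := mulmxKtV (1%:M : 'M[C]_(r + k)) hU (erefl _).
rewrite mul1mx in h2.
move: h1 h2; rewrite tr_row_mx map_col_mx mul_row_col mul_col_row.
move=> h1 h2; move: h2; rewrite [X in _ = X](scalar_mx_block r k).
by case/eq_block_mx => -> -> -> ->.
Qed.

Lemma hcat_facts (C : numClosedFieldType) m r (hr : (r <= m)%N)
  (U1 : 'M[C]_(m,r)) (U2 : 'M_(m,m - r)) :
  hcat hr U1 U2 \is unitarymx ->
  [/\ U1^t* *m U1 = 1%:M, U2^t* *m U2 = 1%:M, U1^t* *m U2 = 0, U2^t* *m U1 = 0
    & U1 *m U1^t* + U2 *m U2^t* = 1%:M].
Proof. exact: rowmx_facts. Qed.

Lemma pinv_uniq (C : numClosedFieldType) m n (A : 'M[C]_(m,n)) X Y :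
  is_pinv A X -> is_pinv A Y -> X = Y.
Proof.
rewrite /is_pinv /ctmx => -[hX1 hX2 hX3 hX4] [hY1 hY2 hY3 hY4].
have eA1 : A^t* *m (A *m Y) = A^t*.
  by rewrite -hY3 -adjM hY1.
have eA2 : (X *m A) *m A^t* = A^t*.
  by rewrite -hX4 -adjM mulmxA hX1.
have e1 : X = X *m X^t* *m A^t*.
  by rewrite -mulmxA -adjM hX3 mulmxA hX2.
have e2 : X *m X^t* *m A^t* = X *m A *m Y.
  by rewrite -eA1 !mulmxA -(mulmxA X) -adjM hX3 mulmxA hX2.
have f1 : Y = A^t* *m Y^t* *m Y.
  by rewrite -adjM hY4 hY2.
have f2 : A^t* *m Y^t* *m Y = X *m A *m Y.
  by rewrite -eA2 -(mulmxA (X *m A)) -adjM hY4 -!mulmxA (mulmxA Y A Y) hY2.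
by rewrite e1 e2 -f2 -f1.
Qed.

Lemma pure_id (C : numClosedFieldType) m n (A B : 'M[C]_(m,n)) (Ad Bd : 'M[C]_(n,m)) :
  Bd - Ad = Bd *m (1%:M - A *m Ad) - (1%:M - Bd *m B) *m Ad - Bd *m (B - A) *m Ad.
Proof.
rewrite !mulmxBr !mulmxBl !mulmx1 !mul1mx !mulmxA.
move: (Bd *m A *m Ad) (Bd *m B *m Ad) => x y.
rewrite !opprB !addrA -(addrA _ x (- y)) addrAC -(addrA (Bd - x + y)).
by rewrite -addrA (addrA y) [y + _]addrC subrK addrA subrK.
Qed.

Lemma frob2_add3 (C : numClosedFieldType) m n (X Y Z : 'M[C]_(m,n)) :
  \tr (X *m Y^t*) = 0 /\ \tr (Y *m X^t*) = 0 ->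
  \tr (X *m Z^t*) = 0 /\ \tr (Z *m X^t*) = 0 ->
  \tr (Y *m Z^t*) = 0 /\ \tr (Z *m Y^t*) = 0 ->
  frob2 (X + Y + Z) = frob2 X + frob2 Y + frob2 Z.
Proof.
move=> [h1 h2] [h3 h4] [h5 h6].
rewrite frob2_add ?frob2_add //.
  by rewrite mulmxDl mxtraceD h3 h5 addr0.
by rewrite adjD mulmxDr mxtraceD h4 h6 addr0.
Qed.

Lemma core (C : numClosedFieldType) m n r s k1 l2
  (U1 : 'M[C]_(m,r)) (U2 : 'M[C]_(m,k1)) (V1 : 'M[C]_(n,r))
  (Ut1 : 'M[C]_(m,s)) (Vt1 : 'M[C]_(n,s)) (Vt2 : 'M[C]_(n,l2))
  (D Di : 'M[C]_r) (Dt Dti : 'M[C]_s) :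
  U1^t* *m U1 = 1%:M -> V1^t* *m V1 = 1%:M -> Ut1^t* *m Ut1 = 1%:M ->
  U2^t* *m U2 = 1%:M -> U2^t* *m U1 = 0 -> U1 *m U1^t* + U2 *m U2^t* = 1%:M ->
  Vt1^t* *m Vt1 = 1%:M -> Vt2^t* *m Vt2 = 1%:M -> Vt2^t* *m Vt1 = 0 ->
  Vt1 *m Vt1^t* + Vt2 *m Vt2^t* = 1%:M ->
  D *m Di = 1%:M -> Dti *m Dt = 1%:M ->
  frob2 (Vt1 *m Dti *m Ut1^t* - V1 *m Di *m U1^t*) =
    frob2 (Dti *m Ut1^t* *m U2) + frob2 (Vt2^t* *m V1 *m Di)
    + frob2 (Vt1 *m Dti *m Ut1^t* *m (Ut1 *m Dt *m Vt1^t* - U1 *m D *m V1^t*)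
             *m (V1 *m Di *m U1^t*)).
Proof.
move=> hU1 hV1 hUt1 hU2 hU21 hU hVt1 hVt2 hVt21 hVt hD hDt.
set A := U1 *m D *m V1^t*; set B := Ut1 *m Dt *m Vt1^t*.
set Ad := V1 *m Di *m U1^t*; set Bd := Vt1 *m Dti *m Ut1^t*.
have hAAd : 1%:M - A *m Ad = U2 *m U2^t*.
  rewrite /A /Ad !mulmxA -(mulmxA (U1 *m D)) hV1 mulmx1 -(mulmxA U1) hD mulmx1.
  by rewrite -hU addrAC subrr add0r.
have hBdB : 1%:M - Bd *m B = Vt2 *m Vt2^t*.
  rewrite /B /Bd !mulmxA -(mulmxA (Vt1 *m Dti)) hUt1 mulmx1 -(mulmxA Vt1) hDt mulmx1.
  by rewrite -hVt addrAC subrr add0r.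
rewrite (pure_id A B Ad Bd) hAAd hBdB.
set X1 := Bd *m (U2 *m U2^t*).
set X2 := Vt2 *m Vt2^t* *m Ad.
set X3 := Bd *m (B - A) *m Ad.
rewrite frob2_add3; first last.
- apply: orth_l.
  rewrite /X2 /X3 /Bd adjN mulNmx mulmxN opprK !adjM trmxCK !mulmxA.
  by rewrite -(mulmxA _ (Vt2^t*) Vt1) hVt21 !mulmx0 !mul0mx.
- apply: orth_r.
  rewrite /X1 /X3 /Ad adjN mulmxN !adjM trmxCK !mulmxA.
  by rewrite -(mulmxA _ (U2^t*) U1) hU21 !mulmx0 !mul0mx oppr0.
- apply: orth_r.
  rewrite /X1 /X2 /Ad adjN mulmxN !adjM trmxCK !mulmxA.
  by rewrite -(mulmxA _ (U2^t*) U1) hU21 !mulmx0 !mul0mx oppr0.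
rewrite !frob2_opp.
have -> : X1 = Vt1 *m (Dti *m Ut1^t* *m U2) *m U2^t* by rewrite /X1 /Bd !mulmxA.
have -> : X2 = Vt2 *m (Vt2^t* *m V1 *m Di) *m U1^t* by rewrite /X2 /Ad !mulmxA.
rewrite (frob2_mulr (Q := U2^t*)) ?trmxCK // (frob2_mull (P := Vt1)) //.
by rewrite (frob2_mulr (Q := U1^t*)) ?trmxCK // (frob2_mull (P := Vt2)).
Qed.

Lemma pinv_svd (C : numClosedFieldType) m n r (U1 : 'M[C]_(m,r)) (V1 : 'M[C]_(n,r))
  (D Di : 'M[C]_r) :
  U1^t* *m U1 = 1%:M -> V1^t* *m V1 = 1%:M -> D *m Di = 1%:M -> Di *m D = 1%:M ->
  is_pinv (U1 *m D *m V1^t*) (V1 *m Di *m U1^t*).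
Proof.
move=> hU hV hD hDi.
have e1 : U1 *m D *m V1^t* *m (V1 *m Di *m U1^t*) = U1 *m U1^t*.
  by rewrite !mulmxA -(mulmxA (U1 *m D)) hV mulmx1 -(mulmxA U1) hD mulmx1.
have e2 : V1 *m Di *m U1^t* *m (U1 *m D *m V1^t*) = V1 *m V1^t*.
  by rewrite !mulmxA -(mulmxA (V1 *m Di)) hU mulmx1 -(mulmxA V1) hDi mulmx1.
rewrite /is_pinv /ctmx e1 e2 !adjM !trmxCK; split => //.
  by rewrite !mulmxA -(mulmxA U1) hU mulmx1.
by rewrite !mulmxA -(mulmxA V1) hV mulmx1.
Qed.

Lemma diag_unit (C : numClosedFieldType) r (sigma : 'rV[C]_r) :
  sv_seq sigma -> diag_mx sigma \in unitmx.
Proof.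
move=> [hs _]; rewrite unitmxE det_diag unitfE.
by apply/prodf_neq0 => i _; rewrite gt_eqF.
Qed.

Lemma diag_inv_adj (C : numClosedFieldType) r (sigma : 'rV[C]_r) :
  sv_seq sigma -> (invmx (diag_mx sigma))^t* = invmx (diag_mx sigma).
Proof.
move=> [hs _]; rewrite trmx_inv map_invmx tr_diag_mx map_diag_mx.
congr (invmx (diag_mx _)); apply/matrixP => i j; rewrite mxE (ord1 i).
exact: (geC0_conj (ltW (hs j))).
Qed.

Lemma frob2_swap (C : numClosedFieldType) m n (P : 'M[C]_(n,m)) (Q : 'M[C]_(n,m))
  (X Y : 'M[C]_(m,n)) : frob2 (P *m (X - Y) *m Q) = frob2 (P *m (Y - X) *m Q).
Proof. by rewrite -opprB mulmxN mulNmx frob2_opp. Qed.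

Theorem lemma2p2 (C : numClosedFieldType) (m n r s : nat)
  (hrm : (r <= m)%N) (hrn : (r <= n)%N) (hsm : (s <= m)%N) (hsn : (s <= n)%N)
  (A B : 'M[C]_(m, n))
  (U1 : 'M[C]_(m, r)) (U2 : 'M[C]_(m, m - r))
  (V1 : 'M[C]_(n, r)) (V2 : 'M[C]_(n, n - r)) (sigma : 'rV[C]_r)
  (Ut1 : 'M[C]_(m, s)) (Ut2 : 'M[C]_(m, m - s))
  (Vt1 : 'M[C]_(n, s)) (Vt2 : 'M[C]_(n, n - s)) (sigmat : 'rV[C]_s)
  (Ad Bd : 'M[C]_(n, m)) :
  \rank A = r -> \rank B = s ->
  hcat hrm U1 U2 \is unitarymx -> hcat hrn V1 V2 \is unitarymx ->
  hcat hsm Ut1 Ut2 \is unitarymx -> hcat hsn Vt1 Vt2 \is unitarymx ->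
  sv_seq sigma -> sv_seq sigmat ->
  A = U1 *m diag_mx sigma *m ctmx V1 ->
  B = Ut1 *m diag_mx sigmat *m ctmx Vt1 ->
  is_pinv A Ad -> is_pinv B Bd ->
  let E := B - A in
  frob2 (Bd - Ad) =
    frob2 (invmx (diag_mx sigmat) *m ctmx Ut1 *m U2)
    + frob2 (ctmx Vt2 *m V1 *m invmx (diag_mx sigma))
    + frob2 (Bd *m E *m Ad)
  /\
  frob2 (Bd - Ad) =
    frob2 (ctmx Ut2 *m U1 *m invmx (diag_mx sigma))
    + frob2 (invmx (diag_mx sigmat) *m ctmx Vt1 *m V2)
    + frob2 (Ad *m E *m Bd).
Proof.
move=> _ _ /hcat_facts [hU1 hU2 hU12 hU21 hU] /hcat_facts [hV1 hV2 hV12 hV21 hV]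
  /hcat_facts [hUt1 hUt2 hUt12 hUt21 hUt] /hcat_facts [hVt1 hVt2 hVt12 hVt21 hVt]
  hs hst hA hB hAd hBd E.
rewrite /E; rewrite /ctmx in hA hB *.
have uD := diag_unit hs; have uDt := diag_unit hst.
have hD := mulmxV uD; have hDi := mulVmx uD.
have hDt := mulmxV uDt; have hDti := mulVmx uDt.
have eAd : Ad = V1 *m invmx (diag_mx sigma) *m U1^t*.
  apply: (pinv_uniq hAd); rewrite hA; exact: pinv_svd.
have eBd : Bd = Vt1 *m invmx (diag_mx sigmat) *m Ut1^t*.
  apply: (pinv_uniq hBd); rewrite hB; exact: pinv_svd.
subst A B Ad Bd.
split; first exact: (core hU1 hV1 hUt1 hU2 hU21 hU hVt1 hVt2 hVt21 hVt hD hDti).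
have := core (U1 := Ut1) (U2 := Ut2) (V1 := Vt1) (Ut1 := U1)
  (Vt1 := V1) (Vt2 := V2) hUt1 hVt1 hU1 hUt2 hUt21 hUt hV1 hV2 hV21 hV hDt hDi.
move=> h; rewrite -[LHS]frob2_opp GRing.opprB h.
rewrite frob2_swap.
congr (_ + _ + _).
  by rewrite -frob2_adj !adjM trmxCK diag_inv_adj // mulmxA.
by rewrite -[RHS]frob2_adj !adjM trmxCK diag_inv_adj // mulmxA.
Qed.
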